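(* Let $q$ be a power of the prime $p$ and let $n$ be a positive integer not divisible by $p$. Let $h\in\mathbb{F}_q[x]$ with $\gcd\left(h(x),\frac{x^n-1}{x-1}\right)=1$, and let $b(x)=\sum_{i=0}^m b_i x^i\in\mathbb{F}_q[x]$ be a permutation polynomial of $\mathbb{F}_q$. Then for every $\theta_0,\ldots,\theta_{q-1}\in\mathbb{F}_{q^n}$, the polynomial $$P(x)=L_h(x)-\frac{h(1)}{n}\cdot\mathrm{Tr}_{q^n/q}(x)+\sum_{i=0}^m\frac{b_i}{n}\cdot\mathrm{Tr}_{q^n/q}(x)^i+\sum_{i=0}^{q-1}(\theta_i^q-\theta_i)\cdot\mathrm{Tr}_{q^n/q}(x)^i$$ is a permutation polynomial of $\mathbb{F}_{q^n}$. In addition, if $\gcd\left(h(x)+1,\frac{x^n-1}{x-1}\right)=1$ and $b$ is a complete permutation polynomial of $\mathbb{F}_q$, then $P$ is a complete permutation polynomial of $\mathbb{F}_{q^n}$.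
   Context: For $u(x)=\sum_{i=0}^m a_i x^i\in\mathbb{F}_q[x]$, its linearized $q$-associate is $L_u(x)=\sum_{i=0}^m a_i x^{q^i}$. $\mathrm{Tr}_{q^n/q}(x)=x+x^q+\cdots+x^{q^{n-1}}$. A permutation polynomial of a finite field $K$ is a polynomial inducing a bijection of $K$; it is a complete permutation polynomial if moreover $b(x)+x$ induces a bijection of $K$. *)

(* Defs.v *)
From HB Require Import structures.
From mathcomp Require Import all_boot all_order all_algebra all_field.
Set Implicit Arguments. Unset Strict Implicit. Unset Printing Implicit Defensive.
Import GRing.Theory.
Local Open Scope ring_scope.

Definition lin_assoc (R : nzRingType) (q : nat) (u : {poly R}) : {poly R} :=
  \sum_(i < size u) u`_i *: 'X^(q ^ i).

Definition trace_poly (R : nzRingType) (q n : nat) : {poly R} :=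
  \sum_(i < n) 'X^(q ^ i).

(* Main.v *)
Require Import Defs.
From HB Require Import structures.
From mathcomp Require Import ring.
From mathcomp Require Import all_boot all_order all_algebra all_fingroup all_solvable all_field.
Set Implicit Arguments. Unset Strict Implicit. Unset Printing Implicit Defensive.
Import GRing.Theory.
Local Open Scope ring_scope.

Section S.
Variables (F : finFieldType) (L : fieldExtType F).
Local Notation q := #|F|.

Lemma q_gt0 : (0 < q)%N. Proof. exact: ltnW (finNzRing_gt1 F). Qed.

Lemma q_pnat : [pchar L].-nat q.
Proof.
have [p pr pF] := finPcharP F.
have pL : p \in [pchar L] by rewrite (pchar_lalg L).
rewrite (eq_pnat _ (pcharf_eq pL)).
have /and3P[pg _ _] := fin_ring_pchar_abelem pF.
by rewrite /pgroup cardsT in pg.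
Qed.

Lemma cardL n : \dim {:L} = n -> forall x : L, x ^+ (q ^ n) = x.
Proof.
move=> hd x.
have := @expf_card (FinFieldExtType L) x.
have -> : #|FinFieldExtType L| = (q ^ n)%N.
  have e : #|(fullv : {vspace finvect_type L})| = #|finvect_type L|.
    by apply: eq_card => v; rewrite memvf.
  rewrite -[LHS]/#|finvect_type L| -e card_vspace. by rewrite -hd.
done.
Qed.

Lemma frD k (x y : L) : (x + y) ^+ (q ^ k) = x ^+ (q ^ k) + y ^+ (q ^ k).
Proof. by apply: exprDn_pchar; rewrite pnatX q_pnat. Qed.

Lemma fr0 k : (0 : L) ^+ (q ^ k) = 0.
Proof. by rewrite expr0n expn_eq0 (negbTE (lt0n_neq0 q_gt0)) andFb. Qed.

Lemma frsum k I (r : seq I) (P : pred I) (f : I -> L) :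
  (\sum_(i <- r | P i) f i) ^+ (q ^ k) = \sum_(i <- r | P i) f i ^+ (q ^ k).
Proof. exact: (big_morph _ (frD k) (fr0 k)). Qed.

Lemma frF k (c : F) : c ^+ (q ^ k) = c.
Proof.
elim: k => [|k IH]; first by rewrite expn0 expr1.
by rewrite expnSr exprM IH expf_card.
Qed.

Lemma frA k (c : F) : (c%:A : L) ^+ (q ^ k) = c%:A.
Proof. by rewrite exprZn expr1n frF. Qed.

Lemma frZ k (c : F) (x : L) : (c *: x) ^+ (q ^ k) = c *: x ^+ (q ^ k).
Proof. by rewrite -[c *: x]mulr_algl exprMn frA mulr_algl. Qed.

Lemma frM k j (x : L) : (x ^+ (q ^ k)) ^+ (q ^ j) = x ^+ (q ^ (k + j)).
Proof. by rewrite -exprM expnD. Qed.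

Definition Lop (u : {poly F}) (x : L) := \sum_(i < size u) u`_i *: x ^+ (q ^ i).

Lemma LopE (u : {poly F}) k (x : L) : (size u <= k)%N -> Lop u x = \sum_(i < k) u`_i *: x ^+ (q ^ i).
Proof.
move=> hk; rewrite /Lop (big_ord_widen k (fun i => u`_i *: x ^+ (q ^ i)) hk).
rewrite big_mkcond; apply: eq_bigr => i _; case: ifP => // /negbT.
by rewrite -leqNgt => H; rewrite nth_default // scale0r.
Qed.

Lemma Lop0 (x : L) : Lop 0 x = 0.
Proof. by rewrite /Lop size_poly0 big_ord0. Qed.

Lemma LopD (u v : {poly F}) (x : L) : Lop (u + v) x = Lop u x + Lop v x.
Proof.
pose k := maxn (size u) (size v).
rewrite (@LopE (u + v) k) ?(leq_trans (size_polyD _ _)) //.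
rewrite (@LopE u k) ?leq_maxl // (@LopE v k) ?leq_maxr //.
by rewrite -big_split /=; apply: eq_bigr => i _; rewrite coefD scalerDl.
Qed.

Lemma LopZ c (u : {poly F}) (x : L) : Lop (c *: u) x = c *: Lop u x.
Proof.
rewrite (@LopE _ (size u)) ?size_scale_leq // /Lop scaler_sumr.
by apply: eq_bigr => i _; rewrite coefZ scalerA.
Qed.

Lemma LopC c (x : L) : Lop c%:P x = c *: x.
Proof.
by rewrite (@LopE _ 1) ?size_polyC_leq1 // big_ord1 coefC /= expn0 expr1.
Qed.

Lemma Lop1 (x : L) : Lop 1 x = x.
Proof. by rewrite -polyC1 LopC scale1r. Qed.

Lemma LopX (u : {poly F}) (x : L) : Lop (u * 'X) x = Lop u (x ^+ q).
Proof.
rewrite (@LopE _ (size u).+1); last first.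
  by rewrite (leq_trans (size_mul_leq _ _)) // size_polyX addn2.
rewrite big_ord_recl coefMX /= scale0r add0r /Lop.
apply: eq_bigr => i _; rewrite coefMX /=.
by rewrite -exprM -expnS.
Qed.

Lemma LopxD (u : {poly F}) (x y : L) : Lop u (x + y) = Lop u x + Lop u y.
Proof. by rewrite /Lop -big_split; apply: eq_bigr => i _; rewrite frD scalerDr. Qed.

Lemma Lopx0 (u : {poly F}) : Lop u 0 = 0.
Proof. by rewrite /Lop big1 // => i _; rewrite fr0 scaler0. Qed.

Lemma LopxZ (u : {poly F}) c (x : L) : Lop u (c *: x) = c *: Lop u x.
Proof.
rewrite /Lop scaler_sumr; apply: eq_bigr => i _.
by rewrite frZ !scalerA mulrC.
Qed.

Lemma Lop_fr (u : {poly F}) (x : L) k : (Lop u x) ^+ (q ^ k) = Lop u (x ^+ (q ^ k)).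
Proof.
rewrite /Lop frsum; apply: eq_bigr => i _.
by rewrite frZ !frM addnC.
Qed.

Lemma LopM (u v : {poly F}) (x : L) : Lop (u * v) x = Lop u (Lop v x).
Proof.
elim/poly_ind: u v x => [|u c IH] v x; first by rewrite mul0r !Lop0.
rewrite mulrDl -mulrA [_ * v]mulrC LopD IH LopX mul_polyC LopZ.
rewrite LopD LopC LopX; congr (_ + _).
by have := Lop_fr v x 1; rewrite expn1 => ->.
Qed.


Definition Tr n (x : L) := \sum_(i < n) x ^+ (q ^ i).
Definition Phi n : {poly F} := \sum_(i < n) 'X^i.

Lemma LopXn i (x : L) : Lop 'X^i x = x ^+ (q ^ i).
Proof.
rewrite /Lop size_polyXn big_ord_recr /= coefXn eqxx scale1r big1 ?add0r //.
by move=> j _; rewrite coefXn (ltn_eqF (ltn_ord j)) scale0r.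
Qed.

Lemma LopPhi n x : Lop (Phi n) x = Tr n x.
Proof.
rewrite /Phi (big_morph (fun u => Lop u x) (fun u v => LopD u v x) (Lop0 x)).
by apply: eq_bigr => i _; rewrite LopXn.
Qed.

Lemma TrD n x y : Tr n (x + y) = Tr n x + Tr n y.
Proof. by rewrite -!LopPhi LopxD. Qed.
Lemma TrZ n c x : Tr n (c *: x) = c *: Tr n x.
Proof. by rewrite -!LopPhi LopxZ. Qed.
Lemma TrN n x : Tr n (- x) = - Tr n x.
Proof. by rewrite -scaleN1r TrZ scaleN1r. Qed.
Lemma TrB n x y : Tr n (x - y) = Tr n x - Tr n y.
Proof. by rewrite TrD TrN. Qed.
Lemma TrA n c : Tr n (c%:A) = c%:A *+ n.
Proof. by rewrite /Tr (eq_bigr (fun _ => c%:A)) ?sumr_const ?card_ord // => i _; rewrite frA. Qed.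

Lemma Tr_Lop n h x : Tr n (Lop h x) = Lop h (Tr n x).
Proof. by rewrite -!LopPhi -!LopM mulrC. Qed.

Lemma fix_iter (y : L) k : y ^+ q = y -> y ^+ (q ^ k) = y.
Proof.
move=> hy; elim: k => [|k IH]; first by rewrite expn0 expr1.
by rewrite expnSr exprM IH hy.
Qed.

Lemma Lop_fixed h (y : L) : y ^+ q = y -> Lop h y = h.[1] *: y.
Proof.
move=> hy; rewrite /Lop horner_coef scaler_suml; apply: eq_bigr => i _.
by rewrite fix_iter // expr1n mulr1.
Qed.

Lemma Tr_fix n x : \dim {:L} = n -> (0 < n)%N -> (Tr n x) ^+ q = Tr n x.
Proof.
move=> hd; case: n hd => // n hd _.
rewrite -[q in _ ^+ q]expn1 /Tr frsum.
rewrite big_ord_recr big_ord_recl /= frM addn1 (cardL hd) expn0 expr1 addrC; congr (_ + _).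
by apply: eq_bigr => i _; rewrite frM addn1.
Qed.

Lemma Tr_fr n x : \dim {:L} = n -> (0 < n)%N -> Tr n (x ^+ q) = Tr n x.
Proof.
move=> hd hn; rewrite -[q in x ^+ q]expn1 -LopPhi -Lop_fr LopPhi expn1.
exact: Tr_fix.
Qed.

Lemma fixedF (y : L) : y ^+ q = y -> exists c, y = c%:A.
Proof.
move=> hy.
have [c hc|none] := pickP (fun c : F => c%:A == y); first by exists c; rewrite (eqP hc).
exfalso.
pose P : {poly L} := 'X^q - 'X.
have szP : size P = q.+1.
  rewrite /P size_polyDl ?size_polyXn // size_polyN size_polyX.
  by rewrite ltnS (finNzRing_gt1 F).
have P0 : P != 0 by rewrite -size_poly_eq0 szP.
have H1 : all (root P) (y :: [seq c%:A | c <- enum F]).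
  rewrite /= /root /P !hornerE hy subrr eqxx /=.
  by apply/allP => z /mapP [c _ ->]; rewrite /root !hornerE -[q in _ ^+ q]expn1 frA subrr.
have H2 : uniq (y :: [seq c%:A | c <- enum F]).
  rewrite /= map_inj_uniq ?enum_uniq; last by move=> a b; apply: (fmorph_inj (in_alg L)).
  rewrite andbT; apply/mapP => -[c _ hc].
  by have := none c; rewrite hc eqxx.
by have := max_poly_roots P0 H1 H2; rewrite szP /= size_map -cardE ltnn.
Qed.

Lemma Phi_eq n : Phi n = ('X^n - 1) %/ ('X - 1).
Proof.
rewrite subrX1 mulrC mulpK // -polyC1 polyXsubC_eq0 //.
Qed.

Lemma kernel n h z : coprimep h (Phi n) -> Lop h z = 0 -> Tr n z = 0 -> z = 0.
Proof.
move=> /Bezout_eq1_coprimepP [[u v] /= huv] hz tz.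
by rewrite -(Lop1 z) -huv LopD !LopM hz LopPhi tz !Lopx0 addr0.
Qed.


Lemma inj_gen n h (f : L -> L) (B : F -> F) :
  \dim {:L} = n -> (0 < n)%N -> injective B -> coprimep h (Phi n) ->
  (forall x c, Tr n x = c%:A -> Tr n (f x) = (B c)%:A) ->
  (forall x y, Tr n x = Tr n y -> f x - f y = Lop h x - Lop h y) -> injective f.
Proof.
move=> hd hn hB hc hT hf x y fxy.
have [cx ex] := fixedF (Tr_fix x hd hn).
have [cy ey] := fixedF (Tr_fix y hd hn).
have : (B cx)%:A = (B cy)%:A :> L by rewrite -(hT _ _ ex) -(hT _ _ ey) fxy.
move/(fmorph_inj (in_alg L))/hB => ecxy.
have eT : Tr n x = Tr n y by rewrite ex ey ecxy.
apply/eqP; rewrite -subr_eq0; apply/eqP; apply: (kernel hc).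
  rewrite LopxD -scaleN1r LopxZ scaleN1r -hf //.
  by rewrite fxy subrr.
by rewrite TrB eT subrr.
Qed.

Lemma injL_bij (f : L -> L) : injective f -> bijective f.
Proof. by move=> fi; exact: (@injF_bij (finvect_type L) f fi). Qed.

Lemma Tr0 n : Tr n 0 = 0.
Proof. by rewrite /Tr big1 // => i _; rewrite fr0. Qed.

Lemma Tr_theta n k (th : 'I_k -> L) c :
  \dim {:L} = n -> (0 < n)%N ->
  Tr n (\sum_(i < k) (th i ^+ q - th i) * (c%:A) ^+ i) = 0.
Proof.
move=> hd hn.
rewrite (big_morph (Tr n) (TrD n) (Tr0 n)) big1 // => i _.
by rewrite exprZn expr1n mulr_algr TrZ TrB Tr_fr // subrr scaler0.
Qed.

Lemma hornerT n (x : L) : (trace_poly L q n).[x] = Tr n x.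
Proof.
by rewrite /trace_poly horner_sum; apply: eq_bigr => i _; rewrite hornerXn.
Qed.

Lemma hornerLA h (x : L) : (map_poly (in_alg L) (lin_assoc q h)).[x] = Lop h x.
Proof.
rewrite /lin_assoc raddf_sum /= horner_sum; apply: eq_bigr => i _.
by rewrite map_polyZ map_polyXn hornerZ hornerXn /= mulr_algl.
Qed.

End S.

Unset Implicit Arguments.

Theorem corollary3p7 (F : finFieldType) (L : fieldExtType F) (p n : nat)
  (hp : p \in [pchar F]) (hn0 : (0 < n)%N) (hpn : ~~ (p %| n)%N)
  (hdim : \dim {:L} = n)
  (h b : {poly F})
  (hh : coprimep h (('X^n - 1) %/ ('X - 1)))
  (hb : bijective (fun x : F => b.[x]))
  (theta : 'I_#|F| -> L) :
  let q := #|F| in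
  let T : {poly L} := trace_poly L q n in
  let P : {poly L} :=
    map_poly (in_alg L) (lin_assoc q h)
    - ((h.[1] / n%:R)%:A)%:P * T
    + \sum_(i < size b) ((b`_i / n%:R)%:A)%:P * T ^+ i
    + \sum_(i < q) ((theta i) ^+ q - theta i)%:P * T ^+ i in
  bijective (fun x : L => P.[x]) /\
  (coprimep (h + 1) (('X^n - 1) %/ ('X - 1)) ->
   bijective (fun x : F => b.[x] + x) ->
   bijective (fun x : L => P.[x] + x)).
Proof.
move=> q T P.
have nz : n%:R != 0 :> F by rewrite -(dvdn_pcharf hp).
pose r (t : L) := - (h.[1] / n%:R)%:A * t
   + \sum_(i < size b) (b`_i / n%:R)%:A * t ^+ i
   + \sum_(i < q) (theta i ^+ q - theta i) * t ^+ i.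
have HP : forall x, P.[x] = Lop h x + r (Tr n x).
  move=> x; rewrite /P /r !hornerD hornerN !horner_sum hornerLA hornerCM hornerT.
  rewrite !addrA; congr (_ + _ + _); first by rewrite mulNr.
    by apply: eq_bigr => i _; rewrite hornerCM horner_exp hornerT.
  by apply: eq_bigr => i _; rewrite hornerCM horner_exp hornerT.
have key : forall c, r (c%:A) =
    (- (h.[1] / n%:R) * c + \sum_(i < size b) (b`_i / n%:R) * c ^+ i)%:A
    + \sum_(i < q) (theta i ^+ q - theta i) * (c%:A) ^+ i.
  move=> c; rewrite /r; congr (_ + _).
  rewrite -!in_algE rmorphD rmorphM rmorphN rmorph_sum /=; congr (_ + _).
  apply: eq_bigr => i _; rewrite -[(b`_i / n%:R)%:A]in_algE -[(_ * c ^+ i)%:A]in_algE.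
  by rewrite [RHS]rmorphM /=; congr (_ * _); rewrite exprZn expr1n.
have aux : forall x y : F, x / n%:R * y *+ n = x * y.
  by move=> x y; rewrite -mulr_natr mulrAC divfK.
have TrP : forall x c, Tr n x = c%:A -> Tr n P.[x] = (b.[c])%:A.
  move=> x c ex; rewrite HP TrD Tr_Lop ex key TrD Tr_theta // addr0 TrA.
  rewrite Lop_fixed; last by rewrite -[q in _ ^+ q]expn1 frA.
  rewrite scalerMnl scalerA -scalerDl; congr (_ *: _).
  rewrite mulrnDl mulNr mulNrn aux addNKr horner_coef -sumrMnl.
  by apply: eq_bigr => i _; rewrite aux.
have hc : coprimep h (Phi F n) by rewrite Phi_eq.
split.
  apply: injL_bij; apply: (inj_gen hdim hn0 (bij_inj hb) hc TrP).
  move=> x y e; rewrite !HP e.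
  by rewrite opprD addrACA subrr addr0.
move=> hc1 hb1; rewrite -Phi_eq in hc1.
apply: injL_bij; apply: (inj_gen hdim hn0 (bij_inj hb1) hc1).
  by move=> x c ex; rewrite TrD (TrP _ _ ex) ex scalerDl.
move=> x y e; rewrite !HP e !LopD !Lop1.
move: (r (Tr n y)) (Lop h x) (Lop h y) => R a a'.
by ring.
Qed.
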